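(* With $W=\mathrm{des}(\pi)$ and $W^\ast=\mathrm{des}(\pi^\ast)$ as constructed in the context, \[\mathrm{Var}\bigl(\mathbb{E}(W^\ast-W\mid\pi)\bigr)\le\frac{Cn^5}{n^2\bigl(n^2-\sum_a n_a^2\bigr)^2}\] for an absolute constant $C$ (independent of $h$, $n$ and the $n_a$). Here $\mathbb{E}(\cdot\mid\pi)$ averages over the auxiliary randomness $I,J,i^\ast,j^\ast$.
   Context: Let $h\ge 2$, let $n_1,\dots,n_h$ be positive integers, $n=n_1+\dots+n_h\ge 4$, and let $\pi$ be a uniformly distributed permutation of the multiset $\{1^{n_1},\dots,h^{n_h}\}$ (a sequence $(\pi(1),\dots,\pi(n))$ in which each $a$ occurs $n_a$ times, all such sequences equally likely). $\mathrm{des}(\pi)$ is the number of $i\in\{1,\dots,n-1\}$ with $\pi(i)>\pi(i+1)$. Construction of $\pi^\ast$: Let $I$ be uniformly distributed over $\{(1,2),(2,3),\dots,(n-1,n)\}$; let $J=(a,b)$, for $h\ge a>b\ge 1$, with probability $n_an_b/\sum_{c<d}n_cn_d$; $\pi,I,J$ are independent. Write $I=(i,j)$ with $j=i+1$. If $\pi(i)>\pi(j)$, set $\pi^\ast=\pi$. If $\pi(i)\le\pi(j)$ and $J=(a,b)$: choose $i^\ast$ uniformly from $\{k:\pi(k)=a\}$ and $j^\ast$ uniformly from $\{k:\pi(k)=b\}$, independently of each other and of all else. Then: (1) if $\{i,j\}\cap\{i^\ast,j^\ast\}=\emptyset$, or $i=i^\ast,j\ne j^\ast$, or $i\ne i^\ast,j=j^\ast$,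 obtain $\pi^\ast$ from $\pi$ by exchanging the entries at positions $i$ and $i^\ast$ and exchanging the entries at positions $j$ and $j^\ast$; (2) if $i=j^\ast$ and $j=i^\ast$, exchange the entries at positions $i$ and $j$; (3) if $i=j^\ast$, $j\ne i^\ast$, set $\pi^\ast(i)=\pi(i^\ast)$, $\pi^\ast(j)=\pi(i)$, $\pi^\ast(i^\ast)=\pi(j)$, and $\pi^\ast(k)=\pi(k)$ for $k\notin\{i,j,i^\ast\}$; (4) if $i\ne j^\ast$, $j=i^\ast$, set $\pi^\ast(i)=\pi(j)$, $\pi^\ast(j)=\pi(j^\ast)$, $\pi^\ast(j^\ast)=\pi(i)$, and $\pi^\ast(k)=\pi(k)$ for $k\notin\{i,j,j^\ast\}$. *)

(* Defs.v *)
(* Letters are natural numbers 1..h; sequences are seq nat,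
   positions are 0-based (position k of the paper is k.+1 here, irrelevant). *)
From HB Require Import structures.
From mathcomp Require Import all_boot all_order all_algebra.
Set Implicit Arguments. Unset Strict Implicit. Unset Printing Implicit Defensive.
Import Order.TTheory GRing.Theory Num.Theory.

Definition ntot (h : nat) (ns : nat -> nat) : nat := \sum_(1 <= a < h.+1) ns a.

Definition base (h : nat) (ns : nat -> nat) : seq nat :=
  flatten [seq nseq (ns a) a | a <- iota 1 h].

(* all permutations of the multiset (duplicate-free list) *)
Definition Omega (h : nat) (ns : nat -> nat) : seq (seq nat) :=
  permutations (base h ns).

Definition des (p : seq nat) : nat :=
  \sum_(i < (size p).-1) (nth 0 p i.+1 < nth 0 p i).

Definition positions (p : seq nat) (a : nat) : seq nat :=
  [seq k <- iota 0 (size p) | nth 0 p k == a].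

Definition swap (p : seq nat) (x y : nat) : seq nat :=
  set_nth 0 (set_nth 0 p x (nth 0 p y)) y (nth 0 p x).

(* pi^* built from pi, I = (i, i+1), i^*, j^* (cases of the construction) *)
Definition pstar (p : seq nat) (i ist jst : nat) : seq nat :=
  let j := i.+1 in
  if nth 0 p j < nth 0 p i then p
  else if (i == jst) && (j == ist) then swap p i j
  else if i == jst then
    set_nth 0 (set_nth 0 (set_nth 0 p i (nth 0 p ist)) j (nth 0 p i)) ist (nth 0 p j)
  else if j == ist then
    set_nth 0 (set_nth 0 (set_nth 0 p i (nth 0 p j)) j (nth 0 p jst)) jst (nth 0 p i)
  else swap (swap p i ist) j jst.

Local Open Scope ring_scope.

Definition Ssum (h : nat) (ns : nat -> nat) : nat :=
  (\sum_(1 <= d < h.+1) \sum_(1 <= c < d) ns c * ns d)%N.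

(* E(W^* - W | pi = p): average over I (uniform on the n-1 adjacent pairs),
   J = (a,b), a > b, with prob. n_a n_b / S, and i^*, j^* uniform on the
   positions of a and b respectively. *)
Definition condE (R : realFieldType) (h : nat) (ns : nat -> nat) (p : seq nat) : R :=
  let n := ntot h ns in
  \sum_(i < n.-1) (n.-1)%:R^-1 *
    \sum_(1 <= a < h.+1) \sum_(1 <= b < a)
      ((ns a * ns b)%:R / (Ssum h ns)%:R) *
      \sum_(ist <- positions p a) \sum_(jst <- positions p b)
        ((ns a)%:R^-1 * (ns b)%:R^-1) *
        ((des (pstar p i ist jst))%:R - (des p)%:R).

Definition meanOm (R : realFieldType) (h : nat) (ns : nat -> nat) (X : seq nat -> R) : R :=
  (size (Omega h ns))%:R^-1 * \sum_(p <- Omega h ns) X p.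

Definition varOm (R : realFieldType) (h : nat) (ns : nat -> nat) (X : seq nat -> R) : R :=
  meanOm h ns (fun p => (X p - meanOm h ns X) ^+ 2).

(* Main.v *)
Require Import Defs.
From HB Require Import structures.
From mathcomp Require Import all_boot all_order all_algebra.
From mathcomp Require Import zify ring lra.
Import Order.TTheory GRing.Theory Num.Theory.
Set Implicit Arguments. Unset Strict Implicit. Unset Printing Implicit Defensive.

Lemma nth_swap (t : seq nat) u v w :
  nth 0 (swap t u v) w = if w == v then nth 0 t u else if w == u then nth 0 t v else nth 0 t w.
Proof. by rewrite /swap nth_set_nth /= nth_set_nth. Qed.

Lemma size_swap (t : seq nat) u v : u < size t -> v < size t -> size (swap t u v) = size t.
Proof. move=> hu hv; rewrite /swap !size_set_nth; lia. Qed.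

Lemma swapK (t : seq nat) u v : u < size t -> v < size t -> swap (swap t u v) u v = t.
Proof.
move=> hu hv; apply: (@eq_from_nth _ 0); first by rewrite !size_swap // size_swap.
move=> w _; rewrite !nth_swap.
case: (eqVneq w v) => [->|hwv].
  by rewrite eqxx; case: (eqVneq u v) => [->|].
by rewrite eqxx; case: (eqVneq w u) => [->|].
Qed.


Lemma swap_rcons (q : seq nat) c u v : u < size q -> v < size q ->
  swap (rcons q c) u v = rcons (swap q u v) c.
Proof.
move=> hu hv; apply: (@eq_from_nth _ 0).
  by rewrite size_swap ?size_rcons ?size_swap //; lia.
move=> w _; rewrite nth_swap !nth_rcons size_swap // nth_swap.
case: (eqVneq w v) => [->|hwv]; first by rewrite hv hu.
case: (eqVneq w u) => [->|hwu]; first by rewrite hu hv.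
done.
Qed.

Lemma count_nth_ge (a : pred nat) (t : seq nat) u : u < size t -> a (nth 0 t u) <= count a t.
Proof.
move=> hu; rewrite -(cat_take_drop u t) count_cat (drop_nth 0 hu) /=.
rewrite nth_cat size_take hu ltnn subnn /=; lia.
Qed.

Lemma perm_swap (t : seq nat) u v : u < size t -> v < size t -> perm_eq (swap t u v) t.
Proof.
move=> hu hv; apply/permP => a.
have hs : v < size (set_nth 0 t u (nth 0 t v)) by rewrite size_set_nth; lia.
rewrite /swap (count_set_nth_ltn _ _ _ hs) count_set_nth_ltn // nth_set_nth /= if_same.
have h1 := count_nth_ge a hu; have h2 := count_nth_ge a hv.
lia.
Qed.
Local Open Scope ring_scope.
Definition meanL (R : realFieldType) (L : seq (seq nat)) (X : seq nat -> R) : R :=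
  (size L)%:R^-1 * \sum_(p <- L) X p.
Definition varL (R : realFieldType) (L : seq (seq nat)) (X : seq nat -> R) : R :=
  meanL L (fun p => (X p - meanL L X) ^+ 2).

Lemma sum_const_seq (R : realFieldType) (L : seq (seq nat)) (k : R) :
  \sum_(p <- L) k = (size L)%:R * k.
Proof.
elim: L => [|a L IH]; first by rewrite big_nil mul0r.
by rewrite big_cons IH /= -nat1r mulrDl mul1r.
Qed.

Lemma sum_sq_dec (R : realFieldType) (L : seq (seq nat)) (X : seq nat -> R) c :
  (0 < size L)%N ->
  \sum_(p <- L) (X p - c) ^+ 2 =
  (size L)%:R * varL L X + (size L)%:R * (meanL L X - c) ^+ 2.
Proof.
move=> hL; set N := (size L)%:R; set mu := meanL L X.
have hN : N != 0 by rewrite pnatr_eq0 -lt0n.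
have e1 : N * varL L X = \sum_(p <- L) (X p - mu) ^+ 2.
  by rewrite /varL /meanL mulrA divff // mul1r.
have e2 : \sum_(p <- L) X p = N * mu by rewrite /mu /meanL mulrA divff // mul1r.
rewrite e1.
transitivity (\sum_(p <- L) ((X p - mu) ^+ 2 + (2 * (mu - c)) * (X p - mu) + (mu - c) ^+ 2)).
  by apply: eq_bigr => p _; ring.
rewrite !big_split /= -big_distrr /= sumrB e2 !sum_const_seq -/N; ring.
Qed.

Lemma var_perm (R : realFieldType) (L1 L2 : seq (seq nat)) (X : seq nat -> R) :
  perm_eq L1 L2 -> varL L1 X = varL L2 X.
Proof.
move=> hp; rewrite /varL /meanL (perm_size hp) (perm_big _ hp).
by rewrite (perm_big _ hp).
Qed.

Lemma mean_perm (R : realFieldType) (L1 L2 : seq (seq nat)) (X : seq nat -> R) :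
  perm_eq L1 L2 -> meanL L1 X = meanL L2 X.
Proof. by move=> hp; rewrite /meanL (perm_size hp) (perm_big _ hp). Qed.

Lemma var_map (R : realFieldType) (L : seq (seq nat)) g (X : seq nat -> R) :
  varL (map g L) X = varL L (fun p => X (g p)).
Proof. by rewrite /varL /meanL size_map !big_map. Qed.

Lemma var_eq_in (R : realFieldType) (L : seq (seq nat)) (X Y : seq nat -> R) :
  {in L, X =1 Y} -> varL L X = varL L Y.
Proof.
move=> e; have em : meanL L X = meanL L Y.
  by rewrite /meanL (eq_big_seq _ e).
rewrite /varL em /meanL; congr (_ * _); apply: eq_big_seq => p hp.
by rewrite e.
Qed.

Lemma var_scale (R : realFieldType) (L : seq (seq nat)) (X : seq nat -> R) k :
  varL L (fun p => k * X p) = k ^+ 2 * varL L X.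
Proof.
have em : meanL L (fun p => k * X p) = k * meanL L X.
  by rewrite /meanL -big_distrr /= mulrCA.
rewrite /varL em {1}/meanL.
under eq_bigr => p _ do rewrite -mulrBr exprMn.
by rewrite -big_distrr /= mulrCA.
Qed.

Lemma var1 (R : realFieldType) (p : seq nat) (X : seq nat -> R) : varL [:: p] X = 0.
Proof.
by rewrite /varL /meanL /= !big_cons !big_nil !addr0 invr1 !mul1r subrr expr0n /= mulr0n.
Qed.

Lemma var_ge0 (R : realFieldType) (L : seq (seq nat)) (X : seq nat -> R) : 0 <= varL L X.
Proof.
by rewrite /varL /meanL mulr_ge0 // ?invr_ge0 ?ler0n // sumr_ge0 // => p _; rewrite sqr_ge0.
Qed.
Lemma size_perm (s t : seq nat) : t \in permutations s -> size t = size s.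
Proof. by rewrite mem_permutations => /perm_size. Qed.

Lemma nth_mem_perm (s t : seq nat) m : t \in permutations s -> (m < size s)%N -> nth 0 t m \in s.
Proof.
move=> ht hm; have := ht; rewrite mem_permutations => /perm_mem <-.
by apply: mem_nth; rewrite (size_perm ht).
Qed.

Definition cls (s : seq nat) (n c : nat) := [seq t <- permutations s | nth 0 t n == c].

Lemma clsE (s : seq nat) n c : size s = n.+1 -> c \in s ->
  perm_eq (cls s n c) (map (rcons^~ c) (permutations (rem c s))).
Proof.
move=> hs hc; apply: uniq_perm.
- by rewrite filter_uniq // permutations_uniq.
- rewrite map_inj_uniq ?permutations_uniq // => q1 q2 /rcons_inj [] //.
move=> t; rewrite mem_filter; apply/andP/mapP.
- case=> /eqP htn ht; have st := size_perm ht.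
  exists (take n t).
    rewrite mem_permutations -(perm_cons c); apply: (perm_trans _ (perm_to_rem hc)).
    rewrite -perm_rcons -htn -take_nth; last by rewrite st hs.
    by rewrite take_oversize ?st ?hs // -mem_permutations.
  by rewrite -htn -take_nth ?take_oversize // st hs.
- case=> q; rewrite mem_permutations => hq ->.
  have sq : size q = n.
    by have := perm_size hq; rewrite size_rem // hs.
  rewrite nth_rcons sq ltnn eqxx /=; split => //.
  rewrite mem_permutations perm_rcons; apply: (@perm_trans _ (c :: rem c s)).
    by rewrite perm_cons.
  by rewrite perm_sym perm_to_rem.
Qed.

Lemma sum_cls (R : realFieldType) (s : seq nat) n (G : seq nat -> R) : size s = n.+1 ->
  \sum_(t <- permutations s) G t = \sum_(c <- undup s) \sum_(t <- cls s n c) G t.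
Proof.
move=> hs.
transitivity (\sum_(c <- undup s) \sum_(t <- permutations s)
                 (if nth 0 t n == c then G t else 0)); last first.
  by apply: eq_bigr => c _; rewrite /cls big_filter [RHS]big_mkcond.
rewrite exchange_big /=; apply: eq_big_seq => t ht.
rewrite -big_mkcond /= big_const_seq iter_addr_0.
have -> : count (fun c => nth 0 t n == c) (undup s) = 1%N.
  rewrite (eq_count (a2 := pred1 (nth 0 t n))); last by move=> c /=; rewrite eq_sym.
  by rewrite count_uniq_mem ?undup_uniq // mem_undup nth_mem_perm // hs.
by rewrite mulr1n.
Qed.

Lemma count_sum (R : realFieldType) (t : seq nat) d :
  ((count_mem d t)%:R : R) = \sum_(m < size t) ((nth 0 t m == d)%:R).
Proof.
elim: t => [|a t IH]; first by rewrite big_ord0.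
by rewrite big_ord_recl /= natrD IH.
Qed.

Lemma dbl_count (R : realFieldType) (s : seq nat) n c d m (G : seq nat -> R) :
  size s = n.+1 -> c != d -> (m < n.+1)%N ->
  \sum_(t <- cls s n c) (nth 0 t m == d)%:R * G (swap t m n) =
  \sum_(t <- cls s n d) (nth 0 t m == c)%:R * G t.
Proof.
move=> hs hcd hm.
have memc : forall e t, t \in cls s n e -> (t \in permutations s) && (nth 0 t n == e).
  by move=> e t; rewrite mem_filter andbC.
case: (eqVneq m n) => [->|hmn].
  rewrite !big1_seq // => t /memc /andP [_ /eqP ->].
    by rewrite eq_sym (negbTE hcd) mul0r.
  by rewrite (negbTE hcd) mul0r.
have hm' : (m < n)%N by lia.
have sum_ind : forall (P : pred (seq nat)) (X : seq nat -> R) r,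
    \sum_(t <- r) (P t)%:R * X t = \sum_(t <- r | P t) X t.
  move=> P X r; rewrite [RHS]big_mkcond; apply: eq_bigr => t _.
  by case: (P t); rewrite ?mul1r ?mul0r.
rewrite (sum_ind (fun t => nth 0 t m == d) (fun t => G (swap t m n))).
rewrite (sum_ind (fun t => nth 0 t m == c)).
rewrite -[LHS]big_filter -[RHS]big_filter -(big_map (fun t => swap t m n) predT G).
apply: perm_big; apply: uniq_perm.
- rewrite map_inj_in_uniq ?filter_uniq ?permutations_uniq //.
  move=> t1 t2; rewrite !mem_filter => /and3P [_ _ h1] /and3P [_ _ h2] e.
  have s1 := size_perm h1; have s2 := size_perm h2.
  by rewrite -(swapK (u:=m) (v:=n) (t:=t1)) ?s1 ?hs // e swapK ?s2 ?hs.
- by rewrite !filter_uniq ?permutations_uniq.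
move=> t; apply/mapP/idP.
- case=> t0; rewrite !mem_filter => /and3P [/eqP h0m /eqP h0n h0] ->.
  have s0 := size_perm h0.
  rewrite !nth_swap eqxx (negbTE hmn) eqxx h0m h0n !eqxx /=.
  rewrite mem_permutations; apply: (@perm_trans _ t0); first by rewrite perm_swap // s0 hs.
  by rewrite -mem_permutations.
- rewrite !mem_filter => /and3P [/eqP htm /eqP htn ht].
  have st := size_perm ht.
  exists (swap t m n); last by rewrite swapK // st hs.
  rewrite !mem_filter !nth_swap eqxx (negbTE hmn) eqxx htm htn !eqxx /=.
  rewrite mem_permutations; apply: (@perm_trans _ t); first by rewrite perm_swap // st hs.
  by rewrite -mem_permutations.
Qed.
Lemma cls_size_gt0 (s : seq nat) n c : size s = n.+1 -> c \in s -> (0 < size (cls s n c))%N.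
Proof.
move=> hs hc; rewrite (perm_size (clsE hs hc)) size_map.
have : rem c s \in permutations (rem c s) by rewrite mem_permutations.
by case: (permutations (rem c s)).
Qed.

Lemma sum_cnt (R : realFieldType) (s : seq nat) n c d t : size s = n.+1 -> t \in cls s n c ->
  \sum_(m < n.+1) ((nth 0 t m == d)%:R : R) = (count_mem d s)%:R.
Proof.
move=> hs; rewrite mem_filter => /andP [_ ht]; have st := size_perm ht.
move: (ht); rewrite mem_permutations => /permP /(_ (pred1 d)) <-.
by rewrite count_sum st hs.
Qed.

Lemma coupling (R : realFieldType) (s : seq nat) n (F : seq nat -> R) (M : R) c d :
  size s = n.+1 -> c \in s -> d \in s ->
  (forall t u v, t \in permutations s -> (u < n.+1)%N -> (v < n.+1)%N ->
       `|F (swap t u v) - F t| <= M) ->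
  `|meanL (cls s n c) F - meanL (cls s n d) F| <= M.
Proof.
move=> hs hc hd hL.
case: (eqVneq c d) => [->|hcd].
  rewrite subrr normr0; apply: le_trans (hL s 0%N 0%N _ _ _) => //.
  by rewrite mem_permutations.
set Nc := (size (cls s n c))%:R : R; set Nd := (size (cls s n d))%:R : R.
set kc := (count_mem c s)%:R : R; set kd := (count_mem d s)%:R : R.
have Nc0 : 0 < Nc by rewrite ltr0n cls_size_gt0.
have Nd0 : 0 < Nd by rewrite ltr0n cls_size_gt0.
have kc0 : 0 < kc by rewrite ltr0n -has_count has_pred1.
have kd0 : 0 < kd by rewrite ltr0n -has_count has_pred1.
set Sc := \sum_(t <- cls s n c) F t; set Sd := \sum_(t <- cls s n d) F t.
have gen : forall G : seq nat -> R,
    \sum_(t <- cls s n c) \sum_(m < n.+1) (nth 0 t m == d)%:R * G (swap t m n) =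
    kc * \sum_(t <- cls s n d) G t.
  move=> G; rewrite exchange_big /=.
  under eq_bigr => m _ do rewrite (@dbl_count R s n c d m G hs hcd (ltn_ord m)).
  rewrite exchange_big big_distrr /=; apply: eq_big_seq => t ht.
  by rewrite -big_distrl /= (@sum_cnt R s n d c t hs ht).
have genc : forall G : seq nat -> R,
    \sum_(t <- cls s n c) \sum_(m < n.+1) (nth 0 t m == d)%:R * G t = kd * \sum_(t <- cls s n c) G t.
  move=> G; rewrite big_distrr /=; apply: eq_big_seq => t ht.
  by rewrite -big_distrl /= (@sum_cnt R s n c d t hs ht).
have rel : kd * Nc = kc * Nd.
  have := gen (fun _ => 1); rewrite genc !sum_const_seq !mulr1 -/Nc -/Nd => ->.
  done.
have key : meanL (cls s n c) F - meanL (cls s n d) F =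
    (kd * Sc - kc * Sd) / (kd * Nc).
  rewrite /meanL -/Nc -/Nd -/Sc -/Sd.
  have hkc : kc = kd * Nc / Nd by rewrite rel mulrK // unitfE gt_eqF.
  rewrite hkc; field.
  by rewrite !gt_eqF.
rewrite key -genc -gen -sumrB normrM (ger0_norm (x := (kd * Nc)^-1)); last first.
  by rewrite invr_ge0 mulr_ge0 // ltW.
rewrite ler_pdivrMr ?mulr_gt0 //.
apply: le_trans (ler_norm_sum _ _ _) _.
have -> : M * (kd * Nc) = \sum_(t <- cls s n c) \sum_(m < n.+1) (nth 0 t m == d)%:R * M.
  by rewrite genc sum_const_seq -/Nc; ring.
rewrite big_seq [X in _ <= X]big_seq; apply: ler_sum => t ht.
rewrite -sumrB; apply: le_trans (ler_norm_sum _ _ _) _; apply: ler_sum => m _.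
rewrite -mulrBr normrM ger0_norm ?ler0n //; apply: ler_wpM2l; first by rewrite ler0n.
have ht' : t \in permutations s by move: ht; rewrite mem_filter => /andP [].
by rewrite -normrN opprB; apply: hL.
Qed.
Lemma poincare (R : realFieldType) n : forall (s : seq nat) (F : seq nat -> R) (M : R),
  size s = n ->
  (forall t u v, t \in permutations s -> (u < n)%N -> (v < n)%N ->
       `|F (swap t u v) - F t| <= M) ->
  varL (permutations s) F <= n%:R * M ^+ 2.
Proof.
elim: n => [|n IH] s F M hs hL.
  by move/size0nil: hs => ->; rewrite var1 mul0r.
set L := permutations s.
have sL : s \in L by rewrite mem_permutations.
have NL : (0 < size L)%N by case: (L) sL.
set N := (size L)%:R : R.
have N0 : 0 < N by rewrite ltr0n.
set mu := meanL L F.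
set Nc := fun c => (size (cls s n c))%:R : R.
set mc := fun c => meanL (cls s n c) F.
have M0 : 0 <= M by apply: le_trans (hL s 0%N 0%N sL _ _).
have Nsum : N = \sum_(c <- undup s) Nc c.
  rewrite -[N]mulr1 -sum_const_seq (@sum_cls R s n _ hs).
  by apply: eq_bigr => c _; rewrite sum_const_seq mulr1.
have musum : mu = N^-1 * \sum_(c <- undup s) Nc c * mc c.
  rewrite /mu /meanL -/N (@sum_cls R s n _ hs); congr (_ * _); apply: eq_big_seq => c hc.
  rewrite /mc /meanL mulrA divff ?mul1r // pnatr_eq0 -lt0n cls_size_gt0 //.
  by rewrite -mem_undup.
have dev : forall c, c \in undup s -> `|mc c - mu| <= M.
  move=> c hc.
  have -> : mc c - mu = N^-1 * \sum_(d <- undup s) Nc d * (mc c - mc d).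
    have e : \sum_(d <- undup s) Nc d * (mc c - mc d) =
        \sum_(d <- undup s) Nc d * mc c - \sum_(d <- undup s) Nc d * mc d.
      by rewrite -sumrB; apply: eq_bigr => d _; rewrite mulrBr.
    rewrite musum e -big_distrl /= -Nsum mulrBr mulrA mulVf ?mul1r // gt_eqF //.
  rewrite normrM (ger0_norm (x := N^-1)); last by rewrite invr_ge0 ltW.
  rewrite ler_pdivrMl //.
  rewrite Nsum big_distrl /=; apply: le_trans (ler_norm_sum _ _ _) _.
  rewrite big_seq [X in _ <= X]big_seq; apply: ler_sum => d hd.
  rewrite normrM ger0_norm ?ler0n //; apply: ler_wpM2l; first by rewrite ler0n.
  have hc' : c \in s by rewrite -mem_undup.
  have hd' : d \in s by rewrite -mem_undup.
  exact: (@coupling R s n F M c d hs hc' hd' hL).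
have varc : forall c, c \in undup s -> varL (cls s n c) F <= n%:R * M ^+ 2.
  move=> c; rewrite mem_undup => hc.
  rewrite (var_perm _ (clsE hs hc)) var_map; apply: IH; first by rewrite size_rem // hs.
  move=> q u v hq hu hv.
  have sq : size q = n by rewrite (size_perm hq) size_rem // hs.
  rewrite -swap_rcons ?sq //.
  have hq' : rcons q c \in L.
    have : rcons q c \in cls s n c by rewrite (perm_mem (clsE hs hc)); apply: (map_f (rcons^~ c)).
    by rewrite mem_filter => /andP [].
  by apply: hL => //; apply: ltnW.
rewrite /varL {1}/meanL -/L -/N -/mu (@sum_cls R s n _ hs).
rewrite ler_pdivrMl //.
have -> : N * (n.+1%:R * M ^+ 2) = \sum_(c <- undup s) Nc c * (n%:R * M ^+ 2 + M ^+ 2).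
  by rewrite -big_distrl /= -Nsum -nat1r; ring.
rewrite big_seq [X in _ <= X]big_seq; apply: ler_sum => c hc.
have hc' : c \in s by rewrite -mem_undup.
rewrite sum_sq_dec ?cls_size_gt0 // -/(Nc c) mulrDr lerD //.
  by rewrite ler_wpM2l ?ler0n // varc.
rewrite ler_wpM2l ?ler0n //.
have := dev c hc; rewrite -/(mc c) => hd.
rewrite -[X in X <= _]ger0_norm ?sqr_ge0 // normrX.
by rewrite lerXn2r // ?nnegrE ?normr_ge0.
Qed.
Definition near (a b : nat) : bool := ((a <= b.+2) && (b <= a.+2))%N.
Definition inK (i x y t : nat) : bool := (t == i) || (t == i.+1) || (t == x) || (t == y).
Definition inW (i x y z : nat) : bool := near z i || near z x || near z y.

Lemma pstar_out (p : seq nat) i x y z : ~~ inK i x y z -> nth 0 (pstar p i x y) z = nth 0 p z.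
Proof.
rewrite /inK !negb_or => /andP [/andP [/andP [h1 h2] h3] h4].
rewrite /pstar /swap; case: ifP => _ //.
case: ifP => _; first by do 5 rewrite ?nth_set_nth /= ?(negbTE h1) ?(negbTE h2) ?(negbTE h3) ?(negbTE h4) //=.
case: ifP => _; first by do 5 rewrite ?nth_set_nth /= ?(negbTE h1) ?(negbTE h2) ?(negbTE h3) ?(negbTE h4) //=.
case: ifP => _; first by do 5 rewrite ?nth_set_nth /= ?(negbTE h1) ?(negbTE h2) ?(negbTE h3) ?(negbTE h4) //=.
by do 5 rewrite ?nth_set_nth /= ?(negbTE h1) ?(negbTE h2) ?(negbTE h3) ?(negbTE h4) //=.
Qed.

Lemma pstar_loc (p p' : seq nat) i x y z :
  (forall w, inK i x y w || (w == z) -> nth 0 p w = nth 0 p' w) ->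
  nth 0 (pstar p i x y) z = nth 0 (pstar p' i x y) z.
Proof.
move=> H.
have Hi : nth 0 p i = nth 0 p' i by apply: H; rewrite /inK eqxx.
have Hj : nth 0 p i.+1 = nth 0 p' i.+1 by apply: H; rewrite /inK eqxx ?orbT.
have Hx : nth 0 p x = nth 0 p' x by apply: H; rewrite /inK eqxx ?orbT.
have Hy : nth 0 p y = nth 0 p' y by apply: H; rewrite /inK eqxx ?orbT.
have Hz : nth 0 p z = nth 0 p' z by apply: H; rewrite eqxx ?orbT.
rewrite /pstar /swap /= Hi Hj Hx Hy.
case: ifP => _; first by [].
case: ifP => _; first by do 5 rewrite ?nth_set_nth /= ?Hi ?Hj ?Hx ?Hy ?Hz //=.
case: ifP => _; first by do 5 rewrite ?nth_set_nth /= ?Hi ?Hj ?Hx ?Hy ?Hz //=.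
case: ifP => _; first by do 5 rewrite ?nth_set_nth /= ?Hi ?Hj ?Hx ?Hy ?Hz //=.
by do 5 rewrite ?nth_set_nth /= ?Hi ?Hj ?Hx ?Hy ?Hz //=.
Qed.

Lemma size_pstar (p : seq nat) i x y : (i.+1 < size p)%N -> (x < size p)%N -> (y < size p)%N ->
  size (pstar p i x y) = size p.
Proof.
move=> hi hx hy; rewrite /pstar /swap.
by repeat case: ifP => _; rewrite ?size_set_nth //; lia.
Qed.

Lemma desR (R : realFieldType) (q p : seq nat) : size q = size p ->
  (des q)%:R - (des p)%:R = \sum_(t < (size p).-1)
     (((nth 0 q t.+1 < nth 0 q t)%N)%:R - ((nth 0 p t.+1 < nth 0 p t)%N)%:R : R).
Proof.
move=> e; rewrite /des e !natr_sum -sumrB; done.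
Qed.
Lemma inK_inW i x y t : inK i x y t || inK i x y t.+1 -> inW i x y t && inW i x y t.+1.
Proof. rewrite /inK /inW /near => H. lia. Qed.

Lemma inK_inW1 i x y t : inK i x y t -> inW i x y t.
Proof. rewrite /inK /inW /near => H. lia. Qed.

Lemma delta_loc (R : realFieldType) (p p' : seq nat) i x y :
  size p = size p' -> (i.+1 < size p)%N -> (x < size p)%N -> (y < size p)%N ->
  (forall w, inW i x y w -> nth 0 p w = nth 0 p' w) ->
  ((des (pstar p i x y))%:R - (des p)%:R : R) =
  (des (pstar p' i x y))%:R - (des p')%:R.
Proof.
move=> e hi hx hy H.
rewrite (desR R (size_pstar hi hx hy)) (desR R (q := pstar p' i x y)); last first.
  by rewrite size_pstar -?e.
rewrite -e; apply: eq_bigr => t _.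
case hK: (inK i x y t || inK i x y t.+1).
  have /andP [h1 h2] := inK_inW hK.
  have eq1 : forall z, inW i x y z -> nth 0 (pstar p i x y) z = nth 0 (pstar p' i x y) z.
    move=> z hz; apply: pstar_loc => w /orP [/inK_inW1 hw|/eqP ->]; exact: H.
  by rewrite !eq1 // !H.
move/negbT: hK; rewrite negb_or => /andP [n1 n2].
by rewrite !pstar_out // !subrr.
Qed.

Lemma near_sum_nat u N : (\sum_(k < N) near u k = minn N u.+3 - (u - 2))%N.
Proof.
elim: N => [|N IH]; first by rewrite big_ord0.
rewrite big_ord_recr /= IH /near.
case: (leqP u N.+2) => h1; case: (leqP N u.+2) => h2 /=; lia.
Qed.

Lemma near_sum (R : realFieldType) u N : \sum_(k < N) ((near u k)%:R : R) <= 5.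
Proof.
rewrite -natr_sum near_sum_nat ler_nat; lia.
Qed.

Lemma delta_bound (R : realFieldType) (p : seq nat) i x y :
  (i.+1 < size p)%N -> (x < size p)%N -> (y < size p)%N ->
  `|((des (pstar p i x y))%:R - (des p)%:R : R)| <= 15.
Proof.
move=> hi hx hy; rewrite (desR R (size_pstar hi hx hy)).
apply: le_trans (ler_norm_sum _ _ _) _.
apply: (@le_trans _ _ (\sum_(t < (size p).-1) ((near t i)%:R + (near t x)%:R + (near t y)%:R))).
  apply: ler_sum => t _.
  case hK: (inK i x y t || inK i x y t.+1).
    have /andP [h1 _] := inK_inW hK.
    move: h1; rewrite /inW.
    by case: (near t i); case: (near t x); case: (near t y);
       case: (_ < _)%N; case: (_ < _)%N => //=; rewrite ?subrr ?normr0 ?sub0r ?subr0 ?normrN ?normr1;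
       lra.
  move/negbT: hK; rewrite negb_or => /andP [n1 n2].
  by rewrite !pstar_out // subrr normr0 !addr_ge0 ?ler0n.
rewrite !big_split /=.
have e : forall c, \sum_(t < (size p).-1) ((near t c)%:R : R) <= 5.
  move=> c; apply: le_trans (near_sum R c (size p).-1).
  by apply: ler_sum => t _; rewrite /near andbC.
have := e i; have := e x; have := e y; lra.
Qed.
Definition phi (R : realFieldType) (p : seq nat) i x y : R :=
  ((nth 0 p y < nth 0 p x)%N)%:R * ((des (pstar p i x y))%:R - (des p)%:R).
Definition Tot (R : realFieldType) (p : seq nat) : R :=
  \sum_(i < (size p).-1) \sum_(x < size p) \sum_(y < size p) phi R p i x y.

Lemma phi_bound (R : realFieldType) (p : seq nat) i x y :
  (i.+1 < size p)%N -> (x < size p)%N -> (y < size p)%N -> `|phi R p i x y| <= 15.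
Proof.
move=> hi hx hy; rewrite /phi normrM.
apply: (@le_trans _ _ (1 * 15)); last by rewrite mul1r.
apply: ler_pM => //; first by case: (_ < _)%N; rewrite ?normr1 ?normr0.
exact: delta_bound.
Qed.

Lemma phi_loc (R : realFieldType) (p : seq nat) u v i x y :
  (u < size p)%N -> (v < size p)%N ->
  (i.+1 < size p)%N -> (x < size p)%N -> (y < size p)%N ->
  ~~ inW i x y u -> ~~ inW i x y v -> phi R (swap p u v) i x y = phi R p i x y.
Proof.
move=> hu hv hi hx hy nu nv.
have H : forall w, inW i x y w -> nth 0 (swap p u v) w = nth 0 p w.
  move=> w hw; rewrite nth_swap.
  have -> : (w == v) = false by apply/eqP => e; move: nv; rewrite -e hw.
  have -> : (w == u) = false by apply/eqP => e; move: nu; rewrite -e hw.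
  done.
have hsz : size (swap p u v) = size p by rewrite size_swap.
rewrite /phi (delta_loc R (p := swap p u v) (p' := p)) ?hsz //.
by rewrite !H // /inW /near; lia.
Qed.

Lemma phi_diff (R : realFieldType) (p : seq nat) u v i x y :
  (u < size p)%N -> (v < size p)%N ->
  (i.+1 < size p)%N -> (x < size p)%N -> (y < size p)%N ->
  `|phi R (swap p u v) i x y - phi R p i x y| <=
  30 * (((near u i)%:R + (near v i)%:R) + ((near u x)%:R + (near v x)%:R)
        + ((near u y)%:R + (near v y)%:R)).
Proof.
move=> hu hv hi hx hy.
have hsz : size (swap p u v) = size p by rewrite size_swap.
case hw: (inW i x y u || inW i x y v).
  apply: (@le_trans _ _ (30)).
    apply: le_trans (ler_normB _ _) _.
    have := phi_bound R (p := swap p u v) (i := i) (x := x) (y := y).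
    rewrite hsz => /(_ hi hx hy) h1.
    have := phi_bound R hi hx hy; lra.
  move: hw; rewrite /inW.
  by case: (near u i); case: (near u x); case: (near u y);
     case: (near v i); case: (near v x); case: (near v y) => //= _; lra.
move/negbT: hw; rewrite negb_or => /andP [n1 n2].
rewrite phi_loc // subrr normr0 mulr_ge0 // !addr_ge0 ?ler0n //.
Qed.

Lemma sum3_bound (R : realFieldType) n1 n (a b c : nat -> R) K :
  (n1 <= n)%N -> (forall k, 0 <= a k) -> (forall k, 0 <= b k) -> (forall k, 0 <= c k) ->
  \sum_(i < n1) a i <= K -> \sum_(x < n) b x <= K -> \sum_(y < n) c y <= K ->
  \sum_(i < n1) \sum_(x < n) \sum_(y < n) (a i + b x + c y) <= 3 * K * n%:R ^+ 2.
Proof.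
move=> hn ha hb hc sa sb sc.
have K0 : 0 <= K by apply: le_trans sa; apply: sumr_ge0 => i _.
have cst : forall (m : nat) (k : R), \sum_(j < m) k = m%:R * k.
  by move=> m k; rewrite sumr_const card_ord mulr_natl.
set A := \sum_(i < n1) a i; set B := \sum_(x < n) b x; set C := \sum_(y < n) c y.
have L1 : forall i x, \sum_(y < n) (a i + b x + c y) = n%:R * (a i + b x) + C.
  by move=> i x; rewrite big_split /= cst.
have L2 : forall i, \sum_(x < n) \sum_(y < n) (a i + b x + c y) = n%:R * n%:R * a i + (n%:R * B + n%:R * C).
  move=> i; under eq_bigr => x _ do rewrite L1.
  rewrite big_split /= (cst n C) -mulr_sumr big_split /= (cst n (a i)) -/B; ring.
have e : \sum_(i < n1) \sum_(x < n) \sum_(y < n) (a i + b x + c y) =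
   n%:R * n%:R * A + n1%:R * (n%:R * B + n%:R * C).
  under eq_bigr => i _ do rewrite L2.
  by rewrite big_split /= (cst n1 (n%:R * B + n%:R * C)) -big_distrr /= -/A.
rewrite e.
have n1n : (n1%:R : R) <= n%:R by rewrite ler_nat.
have n0 : (0 : R) <= n%:R by rewrite ler0n.
have n10 : (0 : R) <= n1%:R by rewrite ler0n.
have A0 : 0 <= A by apply: sumr_ge0 => i _.
have B0 : 0 <= B by apply: sumr_ge0 => i _.
have C0 : 0 <= C by apply: sumr_ge0 => i _.
have h1 : n%:R * n%:R * A <= n%:R * n%:R * K by rewrite ler_wpM2l // mulr_ge0.
have h2 : n1%:R * (n%:R * B + n%:R * C) <= n%:R * (n%:R * K + n%:R * K).
  apply: ler_pM => //; first by rewrite addr_ge0 // mulr_ge0.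
  by rewrite lerD // ler_wpM2l.
rewrite expr2; lra.
Qed.
Lemma Tot_lip (R : realFieldType) (p : seq nat) u v :
  (u < size p)%N -> (v < size p)%N ->
  `|Tot R (swap p u v) - Tot R p| <= 900 * (size p)%:R ^+ 2.
Proof.
move=> hu hv; rewrite /Tot size_swap //.
set n := size p.
set g := fun k => 30 * (((near u k)%:R : R) + (near v k)%:R).
have e : \sum_(i < n.-1) \sum_(x < n) \sum_(y < n) phi R (swap p u v) i x y -
         \sum_(i < n.-1) \sum_(x < n) \sum_(y < n) phi R p i x y =
         \sum_(i < n.-1) \sum_(x < n) \sum_(y < n) (phi R (swap p u v) i x y - phi R p i x y).
  rewrite -sumrB; apply: eq_bigr => i _; rewrite -sumrB; apply: eq_bigr => x _.
  by rewrite -sumrB.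
rewrite e.
have g0 : forall k, 0 <= g k by move=> k; rewrite /g mulr_ge0 // addr_ge0 // ler0n.
have gs : forall N, \sum_(k < N) g k <= 300.
  move=> N; rewrite /g -big_distrr /= big_split /=.
  have := near_sum R u N; have := near_sum R v N; lra.
apply: (@le_trans _ _ (\sum_(i < n.-1) \sum_(x < n) \sum_(y < n) (g i + g x + g y))); last first.
  have := sum3_bound (n1 := n.-1) (n := n) (leq_pred n) g0 g0 g0 (gs _) (gs _) (gs _).
  by rewrite (_ : 3 * 300 = 900) //; rewrite -natrM.
apply: le_trans (ler_norm_sum _ _ _) _; apply: ler_sum => i _.
apply: le_trans (ler_norm_sum _ _ _) _; apply: ler_sum => x _.
apply: le_trans (ler_norm_sum _ _ _) _; apply: ler_sum => y _.
have hi : (i.+1 < n)%N by have := ltn_ord i; rewrite /n; lia.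
apply: le_trans (phi_diff R hu hv hi (ltn_ord x) (ltn_ord y)) _.
by rewrite /g !mulrDr.
Qed.
Lemma pos_sum (R : realFieldType) (p : seq nat) a (G : nat -> R) :
  \sum_(ist <- positions p a) G ist = \sum_(x < size p) ((nth 0%N p x == a)%:R * G x).
Proof.
rewrite /positions big_filter big_mkcond /=.
rewrite -{1}(subn0 (size p)) -/(index_iota 0 (size p)) big_mkord.
by apply: eq_bigr => x _; case: (_ == _); rewrite ?mul1r ?mul0r.
Qed.

Lemma sum_ind_nat (R : realFieldType) m N c (g : nat -> R) :
  \sum_(m <= a < N) ((c == a)%:R * g a) = if (m <= c < N)%N then g c else 0.
Proof.
rewrite -(@big_nat1_eq R 0 +%R) big_mkcond /=; apply: eq_bigr => a _.
by rewrite eq_sym; case: (_ == _); rewrite ?mul1r ?mul0r.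
Qed.

Lemma exch4 (R : realFieldType) (A : seq nat) (B : nat -> seq nat) n (F : nat -> nat -> 'I_n -> 'I_n -> R) :
  \sum_(a <- A) \sum_(b <- B a) \sum_(x < n) \sum_(y < n) F a b x y =
  \sum_(x < n) \sum_(y < n) \sum_(a <- A) \sum_(b <- B a) F a b x y.
Proof.
transitivity (\sum_(a <- A) \sum_(x < n) \sum_(y < n) \sum_(b <- B a) F a b x y).
  apply: eq_bigr => a _; rewrite exchange_big; apply: eq_bigr => x _.
  by rewrite exchange_big.
rewrite exchange_big; apply: eq_bigr => x _; by rewrite exchange_big.
Qed.

Lemma condE_Tot (R : realFieldType) h ns (p : seq nat) :
  (forall a, (1 <= a <= h)%N -> (0 < ns a)%N) ->
  (0 < Ssum h ns)%N -> size p = ntot h ns ->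
  (forall x, (x < size p)%N -> (1 <= nth 0%N p x <= h)%N) ->
  condE R h ns p = ((ntot h ns).-1%:R)^-1 * ((Ssum h ns)%:R)^-1 * Tot R p.
Proof.
move=> hns hS hs hp.
rewrite /condE /Tot hs [RHS]mulrC [RHS]big_distrl /=; apply: eq_bigr => i _.
rewrite [RHS]mulrC -mulrA; congr (_ * _).
set k2 := ((Ssum h ns)%:R : R)^-1.
set D := fun x y => ((des (pstar p i x y))%:R - (des p)%:R : R).
transitivity (k2 * \sum_(1 <= a < h.+1) \sum_(1 <= b < a)
   \sum_(x < ntot h ns) \sum_(y < ntot h ns)
       ((nth 0%N p x == a)%:R * ((nth 0%N p y == b)%:R * D x y))).
  rewrite [RHS]big_distrr /=; apply: eq_big_seq => a; rewrite mem_index_iota => ha.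
  rewrite [RHS]big_distrr /=; apply: eq_big_seq => b; rewrite mem_index_iota => hb.
  have na : (ns a)%:R != 0 :> R by rewrite pnatr_eq0 -lt0n hns //; lia.
  have nb : (ns b)%:R != 0 :> R by rewrite pnatr_eq0 -lt0n hns //; lia.
  rewrite pos_sum hs.
  set c := (ns a)%:R^-1 / (ns b)%:R.
  rewrite [X in _ * X = _](eq_bigr (fun x : 'I_(ntot h ns) => c * \sum_(y < ntot h ns)
       ((nth 0%N p x == a)%:R * ((nth 0%N p y == b)%:R * D x y)))); last first.
    move=> x _; rewrite pos_sum hs !big_distrr /=; apply: eq_bigr => y _; rewrite /D; ring.
  rewrite -big_distrr /= mulrA; congr (_ * _).
  rewrite /c /k2 natrM; field.
  by rewrite na nb pnatr_eq0 -lt0n hS.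
rewrite exch4; congr (_ * _).
apply: eq_bigr => x _; apply: eq_bigr => y _.
under eq_bigr => a _ do rewrite -mulr_sumr.
under eq_bigr => a _ do rewrite sum_ind_nat.
rewrite sum_ind_nat.
have := hp x; have := hp y; rewrite hs => /(_ (ltn_ord y)) hy /(_ (ltn_ord x)) hx.
have hx' : (1 <= nth 0%N p x < h.+1)%N by lia.
rewrite hx' /phi /D.
have hy0 : (0 < nth 0%N p y)%N by lia.
case: (leqP (nth 0%N p x) (nth 0%N p y)) => hxy.
  by rewrite andbF mul0r.
by rewrite hy0 mul1r.
Qed.
Lemma size_base h ns : size (base h ns) = ntot h ns.
Proof.
rewrite /base size_flatten /shape -map_comp /ntot sumnE big_map.
rewrite /index_iota subSS subn0; apply: eq_bigr => a _ /=.
by rewrite size_nseq.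
Qed.

Lemma mem_base h ns z : z \in base h ns -> (1 <= z <= h)%N.
Proof.
case/flatten_mapP => a; rewrite mem_iota => ha; rewrite mem_nseq => /andP [_ /eqP ->].
lia.
Qed.

Lemma sq_id h ns :
  ((ntot h ns) ^ 2 = \sum_(1 <= a < h.+1) (ns a) ^ 2 + 2 * Ssum h ns)%N.
Proof.
elim: h => [|h IH].
  by rewrite /ntot /Ssum !big_geq.
have e1 : ntot h.+1 ns = (ntot h ns + ns h.+1)%N by rewrite /ntot big_nat_recr.
have e2 : Ssum h.+1 ns = (Ssum h ns + ntot h ns * ns h.+1)%N.
  by rewrite /Ssum big_nat_recr //= /ntot big_distrl.
have e3 : (\sum_(1 <= a < h.+2) (ns a) ^ 2 = \sum_(1 <= a < h.+1) (ns a) ^ 2 + ns h.+1 ^ 2)%N.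
  by rewrite big_nat_recr.
rewrite e1 e2 e3 sqrnD IH.
lia.
Qed.

Lemma Ssum_gt0 h ns : (2 <= h)%N -> (forall a, (1 <= a <= h)%N -> (0 < ns a)%N) ->
  (0 < Ssum h ns)%N.
Proof.
move=> h2 hns; rewrite /Ssum (bigD1_seq 2) /=; last by rewrite iota_uniq.
  rewrite big_nat1 -addn1 ltn_addr // muln_gt0 !hns //; lia.
by rewrite mem_index_iota; lia.
Qed.
Lemma omega_props h ns p : p \in Omega h ns ->
  size p = ntot h ns /\ (forall x, (x < size p)%N -> (1 <= nth 0%N p x <= h)%N).
Proof.
rewrite /Omega mem_permutations => hp; split.
  by rewrite (perm_size hp) size_base.
move=> x hx; have := mem_nth 0%N hx; rewrite (perm_mem hp); exact: mem_base.
Qed.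

Unset Implicit Arguments.
Theorem lemma2p15 (R : realFieldType) :
  exists C : R, forall (h : nat) (ns : nat -> nat),
    (2 <= h)%N ->
    (forall a, (1 <= a <= h)%N -> (0 < ns a)%N) ->
    (4 <= ntot h ns)%N ->
    varOm h ns (condE R h ns) <=
      C * (ntot h ns)%:R ^+ 5 /
      ((ntot h ns)%:R ^+ 2 *
       ((ntot h ns)%:R ^+ 2 - \sum_(1 <= a < h.+1) (ns a)%:R ^+ 2) ^+ 2).
Proof.
exists (8 * 900 ^+ 2) => h ns h2 hns hn4.
have hS := Ssum_gt0 h2 hns.
set n := ntot h ns; set S := Ssum h ns.
set k := ((n.-1)%:R : R)^-1 * (S%:R)^-1.
have e1 : varOm h ns (condE R h ns) = k ^+ 2 * varL (Omega h ns) (Tot R).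
  rewrite -var_scale; apply: var_eq_in => p hp.
  have [hsz hent] := omega_props hp.
  by rewrite (@condE_Tot R h ns p hns hS hsz hent).
have V : varL (Omega h ns) (Tot R) <= n%:R * (900 * n%:R ^+ 2) ^+ 2.
  apply: poincare; first by rewrite size_base.
  move=> t u v ht hu hv.
  have st : size t = n by rewrite (size_perm ht) size_base.
  by rewrite -st; apply: Tot_lip; rewrite st.
have esq : (n%:R ^+ 2 - \sum_(1 <= a < h.+1) (ns a)%:R ^+ 2 : R) = 2 * S%:R.
  have := congr1 (fun m => (m%:R : R)) (sq_id h ns); rewrite -/n -/S /=.
  rewrite natrD natrM natrX natr_sum => ->.
  under eq_bigr => a _ do rewrite natrX.
  by rewrite addrC addKr.
rewrite e1 esq.
set N := (n%:R : R); set M1 := ((n.-1)%:R : R); set Sr := (S%:R : R).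
have n0 : (0 < n)%N by rewrite /n; lia.
have hN : N = M1 + 1 by rewrite /N /M1 natr1 (prednK n0).
have M13 : 3 <= M1 by rewrite /M1 ler_nat; lia.
have Sr1 : 1 <= Sr by rewrite /Sr ler1n.
have V0 : 0 <= varL (Omega h ns) (Tot R) by apply: var_ge0.
have k0 : 0 <= k ^+ 2 by rewrite sqr_ge0.
apply: (@le_trans _ _ (k ^+ 2 * (N * (900 * N ^+ 2) ^+ 2))).
  by rewrite ler_wpM2l.
set w := (900 : R).
have w0 : 0 < w by rewrite /w ltr0n.
have M10 : 0 < M1 by lra.
have Sr0 : 0 < Sr by lra.
have N0 : 0 < N by lra.
have L : k ^+ 2 * (N * (w * N ^+ 2) ^+ 2) = (w ^+ 2 * N ^+ 3 / Sr ^+ 2) * (N ^+ 2 / M1 ^+ 2).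
  rewrite /k; field; by rewrite !gt_eqF.
have Rr : 8 * w ^+ 2 * N ^+ 5 / (N ^+ 2 * (2 * Sr) ^+ 2) = (w ^+ 2 * N ^+ 3 / Sr ^+ 2) * 2.
  field; by rewrite !gt_eqF.
rewrite L Rr; apply: ler_wpM2l.
  by rewrite mulr_ge0 ?invr_ge0 ?mulr_ge0 ?exprn_ge0 // ltW.
rewrite ler_pdivrMr ?exprn_gt0 // hN; nra.
Qed.
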